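(* Let $\mathbb M$ be an $\mathcal R$-module. Then $\mathbb M$ is dually separated if and only if for every $R$-module $N$ the map $$\operatorname{Hom}_{\mathcal R}(\mathbb M,\mathcal N)\to \operatorname{Hom}_R(\mathbb M(R),N),\qquad f\mapsto f_R,$$ is injective.
   Context: $R$ is a commutative ring. An $\mathcal R$-module is a covariant functor $\mathbb M$ from the category of commutative $R$-algebras to abelian groups such that each $\mathbb M(S)$ is an $S$-module, compatibly with the maps $\mathbb M(S)\to\mathbb M(S')$ induced by $R$-algebra morphisms $S\to S'$. Morphisms of $\mathcal R$-modules are natural transformations $f$ with each $f_S$ $S$-linear. For an $R$-module $N$, $\mathcal N$ denotes the quasi-coherent $\mathcal R$-module $\mathcal N(S)=N\otimes_R S$. For an $\mathcal R$-module $\mathbb M$ and an $R$-algebra $S$, $\mathbb M_{|S}$ is the restriction of $\mathbb M$ to commutative $S$-algebras; the dual $\mathbb M^*$ is $\mathbb M^*(S)=\operatorname{Hom}_{\mathcal S}(\mathbb M_{|S},\mathcal S)$. $\mathbb M_{qc}$ is the quasi-coherent module associated with the $R$-module $\mathbb M(R)$, with natural morphism $\mathbb M_{qc}\to\mathbb M$, $m\otimes s\mapsto s\cdot m$; thus $\mathbb M_{qc}^*(S)=\operatorname{Hom}_R(\mathbb M(R),S)$. $\mathbb M$ is called dually separated if the induced morphism $\mathbb M^*\to\mathbb M_{qc}^*$ is a monomorphism, i.e. for every commutative $R$-algebra $S$ the map $\mathbb M^*(S)\to\operatorname{Hom}_R(\mathbb M(R),S)$, $w\mapsto w_R$, is injective.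 (All Hom-functors considered are assumed to be set-valued.) *)

(* Defs.v *)
From HB Require Import structures.
From mathcomp Require Import all_boot all_order all_algebra.
From Stdlib Require Import ClassicalEpsilon FunctionalExtensionality PropExtensionality.
Set Implicit Arguments.
Unset Strict Implicit.
Unset Printing Implicit Defensive.
Import GRing.Theory.
Local Open Scope ring_scope.

(* Commutative R-algebras: a commutative ring S with a ring morphism   *)
(* R -> S (the structure map).  The zero algebra is allowed.           *)
Record CAlg (R : comPzRingType) := {
  calg_ring :> comPzRingType;
  calg_str : {rmorphism R -> calg_ring}
}.

Record AlgHom (R : comPzRingType) (A B : CAlg R) := {
  ahom :> {rmorphism A -> B};
  ahom_str : forall r, ahom (calg_str A r) = calg_str B r
}.

Definition Ralg (R : comPzRingType) : CAlg R :=
  {| calg_ring := R; calg_str := (idfun : {rmorphism R -> R}) |}.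

Definition alg_unit (R : comPzRingType) (S : CAlg R) : AlgHom (Ralg R) S :=
  @Build_AlgHom R (Ralg R) S (calg_str S : {rmorphism Ralg R -> S}) (fun r => erefl).

Definition alg_id (R : comPzRingType) (S : CAlg R) : AlgHom S S :=
  @Build_AlgHom R S S (idfun : {rmorphism S -> S}) (fun r => erefl).

(* Functoriality is stated pointwise.                                  *)
Record RMod (R : comPzRingType) := {
  Mobj :> forall A : CAlg R, lmodType A;
  Mmap : forall (A B : CAlg R), AlgHom A B -> Mobj A -> Mobj B;
  Mmap_add : forall A B (g : AlgHom A B) (x y : Mobj A),
      Mmap g (x + y) = Mmap g x + Mmap g y;
  Mmap_scale : forall (A B : CAlg R) (g : AlgHom A B) (a : A) (x : Mobj A),
      Mmap g (a *: x) = g a *: Mmap g x;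
  Mmap_id : forall A (g : AlgHom A A), (forall a, g a = a) ->
      forall x, Mmap g x = x;
  Mmap_comp : forall A B C (g : AlgHom A B) (h : AlgHom B C) (k : AlgHom A C),
      (forall a, k a = h (g a)) -> forall x, Mmap k x = Mmap h (Mmap g x)
}.
Arguments Mmap {R} r {A B} _ _.

Record RHom (R : comPzRingType) (M M' : RMod R) := {
  hfun :> forall A : CAlg R, M A -> M' A;
  hfun_add : forall A (x y : M A), @hfun A (x + y) = @hfun A x + @hfun A y;
  hfun_scale : forall (A : CAlg R) (a : A) (x : M A), @hfun A (a *: x) = a *: @hfun A x;
  hfun_nat : forall A B (g : AlgHom A B) (x : M A),
      @hfun B (Mmap M g x) = Mmap M' g (@hfun A x)
}.

(* Dual: M^*(S) = Hom_S(M_{|S}, S).  A commutative S-algebra is        *)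
(* represented as an R-algebra T together with an R-algebra morphism   *)
(* phi : S -> T; morphisms of S-algebras are R-algebra morphisms        *)
(* commuting with these.  The quasi-coherent S-module S evaluated at    *)
(* (T, phi) is S (x)_S T = T.                                           *)
Record Dual (R : comPzRingType) (M : RMod R) (S : CAlg R) := {
  dfun :> forall (T : CAlg R) (phi : AlgHom S T), M T -> T;
  dfun_add : forall (T : CAlg R) (phi : AlgHom S T) (x y : M T),
      dfun phi (x + y) = dfun phi x + dfun phi y;
  dfun_scale : forall (T : CAlg R) (phi : AlgHom S T) (t : T) (x : M T), dfun phi (t *: x) = t * dfun phi x;
  dfun_nat : forall T T' (phi : AlgHom S T) (phi' : AlgHom S T') (g : AlgHom T T'),
      (forall s, g (phi s) = phi' s) ->
      forall x, dfun phi' (Mmap M g x) = g (dfun phi x)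
}.

(* w |-> w_R : M(R) -> S,  m |-> w_S (image of m in M(S)). *)
Definition dual_to_qc (R : comPzRingType) (M : RMod R) (S : CAlg R)
    (w : Dual M S) : M (Ralg R) -> S :=
  fun m => w S (alg_id S) (Mmap M (alg_unit S) m).

Definition dually_separated (R : comPzRingType) (M : RMod R) : Prop :=
  forall S : CAlg R, injective (@dual_to_qc R M S).

(* Tensor product N (x)_R S as an S-module (extension of scalars).     *)
(* Elements: formal sums  sum_i s_i (x) n_i  (lists of pairs) modulo    *)
(* the congruence generated by the tensor relations.                    *)
Section Tensor.
Variables (R : comPzRingType) (N : lmodType R).

Section Obj.
Variable (S : CAlg R).

Inductive teq : seq (S * N) -> seq (S * N) -> Prop :=
 | teq_refl x : teq x x
 | teq_sym x y : teq x y -> teq y x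
 | teq_trans x y z : teq x y -> teq y z -> teq x z
 | teq_cat x x' y y' : teq x x' -> teq y y' -> teq (x ++ y) (x' ++ y')
 | teq_catC x y : teq (x ++ y) (y ++ x)
 | teq_addl s s' n : teq [:: (s + s', n)] [:: (s, n); (s', n)]
 | teq_addr s n n' : teq [:: (s, n + n')] [:: (s, n); (s, n')]
 | teq_zero n : teq [:: (0, n)] [::]
 | teq_bal r s n : teq [:: (s, r *: n)] [:: (calg_str S r * s, n)].

Definition canon (x : seq (S * N)) : seq (S * N) :=
  epsilon (inhabits [::]) (teq x).

Lemma canon_spec x : teq x (canon x).
Proof. exact: (epsilon_spec (inhabits [::]) (teq x) (ex_intro _ x (teq_refl x))). Qed.

Lemma canon_eq x y : teq x y -> canon x = canon y.
Proof.
move=> h; rewrite /canon; congr (epsilon _ _).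
apply: functional_extensionality => z; apply: propositional_extensionality.
split=> hz; [exact: teq_trans (teq_sym h) hz | exact: teq_trans h hz].
Qed.

Lemma canon_idem x : canon (canon x) = canon x.
Proof. exact/canon_eq/teq_sym/canon_spec. Qed.

Definition tens := {x : seq (S * N) | canon x == x}.
HB.instance Definition _ := Choice.on tens.

Definition cl (x : seq (S * N)) : tens :=
  exist _ (canon x) (introT eqP (canon_idem x)).

Lemma cl_val (a : tens) : cl (val a) = a.
Proof. by apply: val_inj => /=; apply/eqP/(valP a). Qed.

Lemma cl_eq x y : teq x y -> cl x = cl y.
Proof. by move=> h; apply: val_inj => /=; apply: canon_eq. Qed.

Lemma teq_cl x : teq (val (cl x)) x.
Proof. exact/teq_sym/canon_spec. Qed.

Lemma tens_ind (P : tens -> Prop) : (forall x, P (cl x)) -> forall a, P a.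
Proof. by move=> h a; rewrite -(cl_val a). Qed.

Definition smap (a : S) (x : seq (S * N)) := map (fun p => (a * p.1, p.2)) x.

Lemma smap_cat a x y : smap a (x ++ y) = smap a x ++ smap a y.
Proof. exact: map_cat. Qed.

Lemma teq_smap a x y : teq x y -> teq (smap a x) (smap a y).
Proof.
elim=> {x y} /=.
- by move=> x; apply: teq_refl.
- by move=> x y _; apply: teq_sym.
- by move=> x y z _ h1 _ h2; apply: teq_trans h1 h2.
- by move=> x x' y y' _ h1 _ h2; rewrite !smap_cat; apply: teq_cat.
- by move=> x y; rewrite !smap_cat; apply: teq_catC.
- by move=> s s' n; rewrite mulrDr; apply: teq_addl.
- by move=> s n n'; apply: teq_addr.
- by move=> n; rewrite mulr0; apply: teq_zero.
- by move=> r s n; rewrite mulrCA; apply: teq_bal.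
Qed.

Definition tadd (a b : tens) : tens := cl (val a ++ val b).
Definition tzero : tens := cl [::].
Definition tscale (s : S) (a : tens) : tens := cl (smap s (val a)).
Definition topp (a : tens) : tens := tscale (-1) a.

Lemma taddE x y : tadd (cl x) (cl y) = cl (x ++ y).
Proof. by apply: cl_eq; apply: teq_cat; apply: teq_cl. Qed.

Lemma tscaleE s x : tscale s (cl x) = cl (smap s x).
Proof. by apply: cl_eq; apply: teq_smap; apply: teq_cl. Qed.

Lemma teq_swap p q u v : teq ([:: p; q] ++ (u ++ v)) ((p :: u) ++ (q :: v)).
Proof.
have h : teq (q :: (u ++ v)) (u ++ q :: v).
  rewrite -cat1s catA -[q :: v]cat1s catA.
  by apply: teq_cat; [apply: teq_catC | apply: teq_refl].
rewrite /= -[p :: q :: _]cat1s -[p :: (u ++ _)]cat1s.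
by apply: teq_cat; [apply: teq_refl | exact: h].
Qed.

Lemma teq_addN x : teq (smap (-1) x ++ x) [::].
Proof.
elim: x => [|[s n] x IH] /=; first exact: teq_refl.
apply: teq_trans (teq_sym (teq_swap _ _ _ _)) _.
rewrite -[[::]]/([::] ++ [::]); apply: teq_cat => //.
apply: teq_trans (teq_sym (teq_addl _ _ _)) _.
by rewrite mulN1r addNr; apply: teq_zero.
Qed.

Lemma teq_scaleDl a b x : teq (smap (a + b) x) (smap a x ++ smap b x).
Proof.
elim: x => [|[s n] x IH] /=; first exact: teq_refl.
apply: teq_trans (teq_swap _ _ _ _).
rewrite -[_ :: smap (a + b) x]cat1s; apply: teq_cat => //.
by rewrite mulrDl; apply: teq_addl.
Qed.

Lemma taddA : associative tadd.
Proof.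
elim/tens_ind=> x; elim/tens_ind=> y; elim/tens_ind=> z.
by rewrite !taddE catA.
Qed.

Lemma taddC : commutative tadd.
Proof.
elim/tens_ind=> x; elim/tens_ind=> y; rewrite !taddE.
exact/cl_eq/teq_catC.
Qed.

Lemma tadd0 : left_id tzero tadd.
Proof. by elim/tens_ind=> x; rewrite taddE. Qed.

Lemma taddN : left_inverse tzero topp tadd.
Proof.
elim/tens_ind=> x; rewrite /topp tscaleE taddE.
exact/cl_eq/teq_addN.
Qed.

HB.instance Definition _ := GRing.isZmodule.Build tens taddA taddC tadd0 taddN.

Lemma tscaleA a b v : tscale a (tscale b v) = tscale (a * b) v.
Proof.
elim/tens_ind: v => x; rewrite !tscaleE /smap -map_comp.
by congr cl; apply: eq_map => -[s n] /=; rewrite mulrA.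
Qed.

Lemma tscale1 : left_id 1 tscale.
Proof.
elim/tens_ind=> x; rewrite tscaleE /smap.
by congr cl; rewrite -[RHS]map_id; apply: eq_map => -[s n] /=; rewrite mul1r.
Qed.

Lemma tscaleDr : right_distributive tscale +%R.
Proof.
move=> a; elim/tens_ind=> x; elim/tens_ind=> y.
by rewrite [cl x + cl y]taddE !tscaleE smap_cat [_ + _]taddE.
Qed.

Lemma tscaleDl v : {morph tscale^~ v : a b / a + b}.
Proof.
elim/tens_ind: v => x a b; rewrite !tscaleE.
change (cl (smap (a + b) x) = tadd (cl (smap a x)) (cl (smap b x))).
rewrite taddE.
exact/cl_eq/teq_scaleDl.
Qed.

HB.instance Definition _ :=
  GRing.Zmodule_isLmodule.Build S tens tscaleA tscale1 tscaleDr tscaleDl.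

End Obj.

Section Map.
Variables (A B : CAlg R) (g : AlgHom A B).

Definition gmap (x : seq (A * N)) : seq (B * N) := map (fun p => (g p.1, p.2)) x.

Lemma teq_gmap x y : teq x y -> teq (gmap x) (gmap y).
Proof.
elim=> {x y} /=.
- by move=> x; apply: teq_refl.
- by move=> x y _; apply: teq_sym.
- by move=> x y z _ h1 _ h2; apply: teq_trans h1 h2.
- by move=> x x' y y' _ h1 _ h2; rewrite /gmap !map_cat; apply: teq_cat.
- by move=> x y; rewrite /gmap !map_cat; apply: teq_catC.
- by move=> s s' n; rewrite rmorphD; apply: teq_addl.
- by move=> s n n'; apply: teq_addr.
- by move=> n; rewrite rmorph0; apply: teq_zero.
- by move=> r s n; rewrite rmorphM ahom_str; apply: teq_bal.
Qed.

Definition tmap (a : tens A) : tens B := @cl B (gmap (val a)).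

Lemma tmapE x : tmap (@cl A x) = @cl B (gmap x).
Proof. by apply: cl_eq; apply: teq_gmap; apply: teq_cl. Qed.

End Map.

Lemma tmap_add A B (g : AlgHom A B) (x y : tens A) :
  tmap g (x + y) = tmap g x + tmap g y.
Proof.
elim/tens_ind: x => x; elim/tens_ind: y => y.
by rewrite [_ + _]taddE !tmapE [_ + _]taddE /gmap map_cat.
Qed.

Lemma tmap_scale A B (g : AlgHom A B) (a : A) (x : tens A) :
  tmap g (a *: x) = g a *: tmap g x.
Proof.
elim/tens_ind: x => x.
rewrite [a *: _]tscaleE !tmapE [_ *: _]tscaleE /gmap /smap -!map_comp.
by congr cl; apply: eq_map => -[s n] /=; rewrite rmorphM.
Qed.

Lemma tmap_id A (g : AlgHom A A) : (forall a, g a = a) -> forall x, tmap g x = x.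
Proof.
move=> hg; elim/tens_ind=> x; rewrite tmapE /gmap.
by congr cl; rewrite -[RHS]map_id; apply: eq_map => -[s n] /=; rewrite hg.
Qed.

Lemma tmap_comp A B C (g : AlgHom A B) (h : AlgHom B C) (k : AlgHom A C) :
  (forall a, k a = h (g a)) -> forall x, tmap k x = tmap h (tmap g x).
Proof.
move=> hk; elim/tens_ind=> x; rewrite !tmapE /gmap -map_comp.
by congr cl; apply: eq_map => -[s n] /=; rewrite hk.
Qed.

Definition QC : RMod R :=
  {| Mobj := fun S => tens S;
     Mmap := @tmap;
     Mmap_add := @tmap_add;
     Mmap_scale := @tmap_scale;
     Mmap_id := @tmap_id;
     Mmap_comp := @tmap_comp |}.

End Tensor.

(* Main.v *)
Require Import Defs.
From HB Require Import structures.
From mathcomp Require Import all_boot all_order all_algebra.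
From Stdlib Require Import FunctionalExtensionality ProofIrrelevance.
Import GRing.Theory.
Local Open Scope ring_scope.

Lemma RHom_ext (R : comPzRingType) (M M' : RMod R) (f g : RHom M M') :
  (forall A x, f A x = g A x) -> f = g.
Proof.
case: f => f fa fs fn; case: g => g ga gs gn /= H.
have E : f = g.
  apply: functional_extensionality_dep => A; apply: functional_extensionality => x; exact: H.
subst g; f_equal; apply: proof_irrelevance.
Qed.

Lemma Dual_ext (R : comPzRingType) (M : RMod R) (S : CAlg R) (w w' : Dual M S) :
  (forall T phi x, w T phi x = w' T phi x) -> w = w'.
Proof.
case: w => w wa ws wn; case: w' => w' wa' ws' wn' /= H.
have E : w = w'.
  apply: functional_extensionality_dep => T; apply: functional_extensionality => phi;
  apply: functional_extensionality => x; exact: H.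
subst w'; f_equal; apply: proof_irrelevance.
Qed.

Section Lift.
Set Implicit Arguments.
Variables (R : comPzRingType) (N : lmodType R) (S : CAlg R) (V : zmodType).

Lemma cl_cat (l l' : seq (S * N)) : @cl _ N S (l ++ l') = @cl _ N S l + @cl _ N S l'.
Proof. by rewrite [_ + _]taddE. Qed.

Lemma cl_nil : @cl _ N S ([::] : seq (S * N)) = 0.
Proof. by []. Qed.

Lemma cl_cons (p : S * N) l : @cl _ N S (p :: l) = @cl _ N S [:: p] + @cl _ N S l.
Proof. by rewrite -cl_cat. Qed.

Lemma clE (l : seq (S * N)) : @cl _ N S l = \sum_(p <- l) @cl _ N S [:: p].
Proof.
elim: l => [|p l IH]; first by rewrite big_nil.
by rewrite big_cons cl_cons IH.
Qed.

Variable h : S -> N -> V.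
Definition lsum (l : seq (S * N)) : V := \sum_(p <- l) h p.1 p.2.
Definition tlift (a : tens N S) : V := lsum (val a).

Hypotheses (hDl : forall s s' n, h (s+s') n = h s n + h s' n)
 (hDr : forall s n n', h s (n+n') = h s n + h s n')
 (h0 : forall n, h 0 n = 0)
 (hbal : forall r s n, h s (r *: n) = h (calg_str S r * s) n).

Lemma lsum_cat l l' : lsum (l ++ l') = lsum l + lsum l'.
Proof. by rewrite /lsum big_cat. Qed.

Lemma teq_lsum x y : teq x y -> lsum x = lsum y.
Proof.
elim=> {x y} //.
- by move=> x y z _ -> _ ->.
- by move=> x x' y y' _ h1 _ h2; rewrite !lsum_cat h1 h2.
- by move=> x y; rewrite !lsum_cat addrC.
- by move=> s s' n; rewrite /lsum !big_cons big_nil /= hDl !addr0.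
- by move=> s n n'; rewrite /lsum !big_cons big_nil /= hDr !addr0.
- by move=> n; rewrite /lsum !big_cons !big_nil /= h0 addr0.
- by move=> r s n; rewrite /lsum !big_cons !big_nil /= hbal.
Qed.

Lemma liftE l : tlift (@cl _ N S l) = lsum l.
Proof. exact: teq_lsum (teq_cl _). Qed.

Lemma lift_add x y : tlift (x + y) = tlift x + tlift y.
Proof.
by elim/tens_ind: x => x; elim/tens_ind: y => y; rewrite -cl_cat !liftE lsum_cat.
Qed.

End Lift.
Arguments tlift {R N S V} h a.
Arguments lsum {R N S V} h l.
Arguments liftE {R N S V h} hDl hDr h0 hbal l.
Arguments lift_add {R N S V h} hDl hDr h0 hbal x y.
Arguments lsum_cat {R N S V} h l l'.
Arguments clE {R N S} l.
Arguments cl_cat {R N S} l l'.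
Arguments cl_cons {R N S} p l.
Arguments cl_nil {R N S}.

Definition sqz (A : comPzRingType) (V : lmodType A) := (A * V)%type.
Arguments sqz {A} V.
HB.instance Definition _ (A : comPzRingType) (V : lmodType A) :=
  GRing.Zmodule.on (sqz V).
Definition sqz_one (A : comPzRingType) (V : lmodType A) : sqz V := (1, 0).
Arguments sqz_one {A} V.
Definition sqz_mul (A : comPzRingType) (V : lmodType A) (x y : sqz V) : sqz V :=
  (x.1 * y.1, x.1 *: y.2 + y.1 *: x.2).

Lemma sqz_mulA (A : comPzRingType) (V : lmodType A) : associative (@sqz_mul A V).
Proof.
case=> x1 x2 [y1 y2] [z1 z2]; rewrite /sqz_mul /=; congr pair; first by rewrite mulrA.
rewrite !scalerDr !scalerA addrA [z1 * x1]mulrC [z1 * y1]mulrC.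
by rewrite -addrA [_ + (y1 * z1) *: _]addrC addrA.
Qed.

Lemma sqz_mulC (A : comPzRingType) (V : lmodType A) : commutative (@sqz_mul A V).
Proof. by case=> x1 x2 [y1 y2]; rewrite /sqz_mul /= mulrC addrC. Qed.

Lemma sqz_mul1 (A : comPzRingType) (V : lmodType A) : left_id (sqz_one V) (@sqz_mul A V).
Proof. by case=> x1 x2; rewrite /sqz_mul /= mul1r scale1r scaler0 addr0. Qed.

Lemma sqz_mulDl (A : comPzRingType) (V : lmodType A) : left_distributive (@sqz_mul A V) +%R.
Proof.
case=> x1 x2 [y1 y2] [z1 z2]; rewrite /sqz_mul /=; congr pair; first by rewrite mulrDl.
rewrite scalerDl scalerDr !addrA; congr (_ + _); rewrite -!addrA; congr (_ + _); exact: addrC.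
Qed.

HB.instance Definition _ (A : comPzRingType) (V : lmodType A) :=
  GRing.Zmodule_isComPzRing.Build (sqz V) (@sqz_mulA A V) (@sqz_mulC A V)
    (@sqz_mul1 A V) (@sqz_mulDl A V).

Definition sinl (A : comPzRingType) (V : lmodType A) (a : A) : sqz V := (a, 0).
Arguments sinl {A} V a.

Lemma sinl_zmod (A : comPzRingType) (V : lmodType A) : GRing.zmod_morphism (@sinl A V).
Proof. by move=> a b; rewrite /sinl; congr pair => /=; rewrite subr0. Qed.

Lemma sinl_mon (A : comPzRingType) (V : lmodType A) : GRing.monoid_morphism (@sinl A V).
Proof.
split=> //; move=> a b; rewrite /sinl; apply: (congr2 pair) => //=.
by rewrite !scaler0 addr0.
Qed.

HB.instance Definition _ (A : comPzRingType) (V : lmodType A) :=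
  GRing.isZmodMorphism.Build A (sqz V) (@sinl A V) (@sinl_zmod A V).
HB.instance Definition _ (A : comPzRingType) (V : lmodType A) :=
  GRing.isMonoidMorphism.Build A (sqz V) (@sinl A V) (@sinl_mon A V).

Definition sqzAlg (R : comPzRingType) (S : CAlg R) (V : lmodType S) : CAlg R :=
  {| calg_ring := sqz V; calg_str := ((@sinl S V) \o calg_str S : {rmorphism _ -> _}) |}.
Arguments sqzAlg {R S} V.

Definition sqz_in (R : comPzRingType) (S : CAlg R) (V : lmodType S) : AlgHom S (sqzAlg V) :=
  @Build_AlgHom R S (sqzAlg V) (@sinl S V : {rmorphism _ -> _}) (fun r => erefl).

Section Forward.
Variables (R : comPzRingType) (M : RMod R) (N : lmodType R) (A : CAlg R).

Definition SA : CAlg R := sqzAlg (tens N A).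
Definition ee (n : N) : SA := (0, @cl _ N A [:: (1, n)]).

Lemma ee_add n n' : ee (n + n') = ee n + ee n'.
Proof.
rewrite /ee; apply: (congr2 pair); first by rewrite /= addr0.
by rewrite /= -cl_cat; apply: cl_eq; apply: teq_addr.
Qed.

Lemma ee_bal r n : ee (r *: n) = calg_str SA r * ee n.
Proof.
rewrite /ee; apply: (congr2 pair); first by rewrite /= mulr0.
rewrite /= scaler0 addr0 [RHS]tscaleE /smap /=.
by apply: cl_eq; apply: teq_bal.
Qed.

Section H.
Variables (T : CAlg R) (phi : AlgHom SA T).
Definition hw (t : T) (n : N) : T := phi (ee n) * t.
Lemma hw_Dl s s' n : hw (s + s') n = hw s n + hw s' n.
Proof. by rewrite /hw mulrDr. Qed.
Lemma hw_Dr s n n' : hw s (n + n') = hw s n + hw s n'.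
Proof. by rewrite /hw ee_add rmorphD mulrDl. Qed.
Lemma hw_0 n : hw 0 n = 0.
Proof. by rewrite /hw mulr0. Qed.
Lemma hw_bal r s n : hw s (r *: n) = hw (calg_str T r * s) n.
Proof. by rewrite /hw ee_bal rmorphM ahom_str mulrCA mulrA. Qed.
Definition hwE := liftE hw_Dl hw_Dr hw_0 hw_bal.

Lemma hw_add x y : tlift hw (x + y) = tlift hw x + tlift hw y.
Proof. exact: (lift_add hw_Dl hw_Dr hw_0 hw_bal x y). Qed.

Lemma hw_scale t x : tlift hw (t *: x) = t * tlift hw x.
Proof.
elim/tens_ind: x => x; rewrite [t *: _]tscaleE !hwE /lsum big_map mulr_sumr.
by apply: eq_bigr => p _; rewrite /hw /= mulrCA.
Qed.
End H.

Lemma hw_nat T T' (phi : AlgHom SA T) (phi' : AlgHom SA T') (g : AlgHom T T') :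
  (forall s, g (phi s) = phi' s) ->
  forall x, tlift (hw phi') (tmap g x) = g (tlift (hw phi) x).
Proof.
move=> hg; elim/tens_ind=> x; rewrite tmapE !hwE /lsum big_map rmorph_sum.
by apply: eq_bigr => p _; rewrite /hw /= rmorphM hg.
Qed.

Variable f : RHom M (QC N).

Definition wf : Dual M SA.
Proof.
refine (@Build_Dual R M SA (fun T phi m => tlift (hw phi) (f T m)) _ _ _).
- by move=> T phi x y; rewrite hfun_add hw_add.
- by move=> T phi t x; rewrite hfun_scale hw_scale.
- by move=> T T' phi phi' g hg x; rewrite hfun_nat; exact: hw_nat.
Defined.

Lemma hw_key (phi : AlgHom SA SA) (hphi : forall s, phi s = s) (u : tens N A) :
  tlift (hw phi) (tmap (@sqz_in R A (tens N A)) u) = (0, u).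
Proof.
elim/tens_ind: u => l; rewrite tmapE hwE /lsum big_map.
elim: l => [|p l IH]; first by rewrite big_nil.
rewrite big_cons IH cl_cons /hw hphi /= /sqz_in /=.
rewrite /GRing.mul /= /sqz_mul /= /sinl /= mul0r scaler0 add0r.
apply: (congr2 pair); first by rewrite /= addr0.
rewrite /= [_ *: _]tscaleE /smap /= mulr1.
by case: p.
Qed.

End Forward.

Lemma forward (R : comPzRingType) (M : RMod R) :
  dually_separated M ->
  forall N : lmodType R, injective (fun f : RHom M (QC N) => f (Ralg R)).
Proof.
move=> DS N f g /= Hfg; apply: RHom_ext => A x.
have Hw : @wf R M N A f = @wf R M N A g.
  apply: (DS (@SA R N A)); apply: functional_extensionality => m; rewrite /dual_to_qc /=.
  by rewrite !hfun_nat Hfg.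
have := f_equal (fun w : Dual M (@SA R N A) => w (@SA R N A) (alg_id _) (Mmap M (@sqz_in R A (tens N A)) x)) Hw.
by rewrite /= !hfun_nat !hw_key // => -[].
Qed.


Unset Implicit Arguments.
Definition Smod (R : comPzRingType) (S : CAlg R) : Type := calg_ring S.
Arguments Smod {R} S.
HB.instance Definition _ (R : comPzRingType) (S : CAlg R) := GRing.Zmodule.on (Smod S).
Definition sscale (R : comPzRingType) (S : CAlg R) (r : R) (s : Smod S) : Smod S :=
  calg_str S r * (s : calg_ring S).
Arguments sscale {R S} r s.

Lemma sscaleA (R : comPzRingType) (S : CAlg R) a b (v : Smod S) :
  sscale a (sscale b v) = sscale (a * b) v.
Proof. by rewrite /sscale rmorphM mulrA. Qed.
Lemma sscale1 (R : comPzRingType) (S : CAlg R) : left_id 1 (@sscale R S).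
Proof. by move=> v; rewrite /sscale rmorph1 mul1r. Qed.
Lemma sscaleDr (R : comPzRingType) (S : CAlg R) : right_distributive (@sscale R S) +%R.
Proof. by move=> a u v; rewrite /sscale mulrDr. Qed.
Lemma sscaleDl (R : comPzRingType) (S : CAlg R) (v : Smod S) :
  {morph sscale^~ v : a b / a + b}.
Proof. by move=> a b; rewrite /sscale rmorphD mulrDl. Qed.

HB.instance Definition _ (R : comPzRingType) (S : CAlg R) :=
  GRing.Zmodule_isLmodule.Build R (Smod S) (@sscaleA R S) (@sscale1 R S)
    (@sscaleDr R S) (@sscaleDl R S).

Lemma SmodZ (R : comPzRingType) (S : CAlg R) r (s : Smod S) :
  r *: s = (calg_str S r * (s : calg_ring S) : calg_ring S).
Proof. by []. Qed.

Section TT.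
Variables (R : comPzRingType) (S : CAlg R) (A : CAlg R).
Notation SM := (Smod S).
Definition smul (x y : SM) : SM := (x : calg_ring S) * (y : calg_ring S).
Definition mulp (p q : A * SM) : A * SM := (p.1 * q.1, smul p.2 q.2).
Fixpoint lprod (l l' : seq (A * SM)) : seq (A * SM) :=
  if l is p :: l then map (mulp p) l' ++ lprod l l' else [::].

Lemma lprod_cat l1 l2 l' : lprod (l1 ++ l2) l' = lprod l1 l' ++ lprod l2 l'.
Proof. by elim: l1 => //= p l1 IH; rewrite IH catA. Qed.

Lemma teq_map1 (f g : A * SM -> A * SM) l :
  (forall q, teq [:: f q] [:: g q]) -> teq (map f l) (map g l).
Proof.
move=> H; elim: l => [|q l IH] /=; first exact: teq_refl.
by rewrite -cat1s -[g q :: _]cat1s; apply: teq_cat.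
Qed.

Lemma teq_interl (f g h : A * SM -> A * SM) l :
  (forall q, teq [:: f q] [:: g q; h q]) -> teq (map f l) (map g l ++ map h l).
Proof.
move=> H; elim: l => [|q l IH] /=; first exact: teq_refl.
apply: teq_trans (teq_swap _ _ _ _).
by rewrite -cat1s; apply: teq_cat.
Qed.

Lemma teq_map0 (f : A * SM -> A * SM) l :
  (forall q, teq [:: f q] [::]) -> teq (map f l) [::].
Proof.
move=> H; elim: l => [|q l IH] /=; first exact: teq_refl.
by rewrite -cat1s -[[::]]/([::] ++ [::]); apply: teq_cat.
Qed.

Lemma teq_mapr p l1 l2 : teq l1 l2 -> teq (map (mulp p) l1) (map (mulp p) l2).
Proof.
elim=> {l1 l2} /=.
- by move=> x; apply: teq_refl.
- by move=> x y _; apply: teq_sym.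
- by move=> x y z _ h1 _ h2; apply: teq_trans h1 h2.
- by move=> x x' y y' _ h1 _ h2; rewrite !map_cat; apply: teq_cat.
- by move=> x y; rewrite !map_cat; apply: teq_catC.
- by move=> s s' n; rewrite /mulp /= mulrDr; apply: teq_addl.
- by move=> s n n'; rewrite /mulp /= /smul mulrDr; apply: teq_addr.
- by move=> n; rewrite /mulp /= mulr0; apply: teq_zero.
- move=> r s n; rewrite /mulp /= mulrCA.
  have -> : smul p.2 (r *: n) = r *: smul p.2 n by rewrite /smul !SmodZ mulrCA.
  exact: teq_bal.
Qed.

Lemma lprod1 p l : lprod [:: p] l = map (mulp p) l.
Proof. by rewrite /= cats0. Qed.

Lemma teq_lprodl l1 l2 l' : teq l1 l2 -> teq (lprod l1 l') (lprod l2 l').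
Proof.
elim=> {l1 l2}.
- by move=> x; apply: teq_refl.
- by move=> x y _; apply: teq_sym.
- by move=> x y z _ h1 _ h2; apply: teq_trans h1 h2.
- by move=> x x' y y' _ h1 _ h2; rewrite !lprod_cat; apply: teq_cat.
- by move=> x y; rewrite !lprod_cat; apply: teq_catC.
- move=> s s' n; rewrite lprod1 /= cats0; apply: teq_interl => q.
  by rewrite /mulp /= mulrDl; apply: teq_addl.
- move=> s n n'; rewrite lprod1 /= cats0; apply: teq_interl => q.
  by rewrite /mulp /= /smul mulrDl; apply: teq_addr.
- move=> n; rewrite lprod1 /=; apply: teq_map0 => q.
  by rewrite /mulp /= mul0r; apply: teq_zero.
- move=> r s n; rewrite !lprod1; apply: teq_map1 => q; rewrite /mulp /= -mulrA.
  have -> : smul (r *: n) q.2 = r *: smul n q.2 by rewrite /smul !SmodZ mulrA.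
  exact: teq_bal.
Qed.

Lemma teq_lprodr l l1 l2 : teq l1 l2 -> teq (lprod l l1) (lprod l l2).
Proof.
move=> h; elim: l => [|p l IH] /=; first exact: teq_refl.
by apply: teq_cat => //; apply: teq_mapr.
Qed.

Definition TT : Type := tens SM A.
HB.instance Definition _ := GRing.Zmodule.on TT.

Definition tmul (x y : TT) : TT := cl (lprod (val x) (val y)).
Definition tone : TT := @cl _ SM A [:: (1, 1)].

Lemma tmulE l l' : tmul (cl l) (cl l') = cl (lprod l l').
Proof.
apply: cl_eq; apply: (teq_trans (teq_lprodl _ _ _ (teq_cl l))).
exact: (teq_lprodr _ _ _ (teq_cl l')).
Qed.

Lemma mulpA p q r : mulp (mulp p q) r = mulp p (mulp q r).
Proof. by rewrite /mulp /smul /= !mulrA. Qed.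
Lemma mulpC p q : mulp p q = mulp q p.
Proof. by rewrite /mulp /smul /= mulrC [(q.2 : calg_ring S) * _]mulrC. Qed.

Lemma lprod_map p l2 l3 : lprod (map (mulp p) l2) l3 = map (mulp p) (lprod l2 l3).
Proof.
elim: l2 => //= q l2 IH; rewrite IH map_cat -map_comp; congr (_ ++ _).
by apply: eq_map => r /=; rewrite mulpA.
Qed.

Lemma lprodA l1 l2 l3 : lprod (lprod l1 l2) l3 = lprod l1 (lprod l2 l3).
Proof. by elim: l1 => //= p l1 IH; rewrite lprod_cat IH lprod_map. Qed.

Lemma big_lprod (V : zmodType) (F : A * SM -> V) l l' :
  \sum_(x <- lprod l l') F x = \sum_(p <- l) \sum_(q <- l') F (mulp p q).
Proof.
elim: l => [|p l IH] /=; first by rewrite !big_nil.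
by rewrite big_cat IH big_cons big_map.
Qed.

Lemma tmulA : associative tmul.
Proof.
elim/tens_ind=> x; elim/tens_ind=> y; elim/tens_ind=> z.
by rewrite !tmulE lprodA.
Qed.

Lemma tmulC : commutative tmul.
Proof.
elim/tens_ind=> x; elim/tens_ind=> y; rewrite !tmulE.
rewrite (clE (lprod x y)) (clE (lprod y x)) !big_lprod exchange_big.
by apply: eq_bigr => q _; apply: eq_bigr => p _; rewrite mulpC.
Qed.

Lemma tmul1 : left_id tone tmul.
Proof.
elim/tens_ind=> x; rewrite tmulE lprod1; congr cl.
rewrite -[RHS]map_id; apply: eq_map => -[a s].
by rewrite /mulp /smul /= !mul1r.
Qed.

Lemma tmulDl : left_distributive tmul +%R.
Proof.
elim/tens_ind=> x; elim/tens_ind=> y; elim/tens_ind=> z.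
by rewrite -cl_cat !tmulE lprod_cat cl_cat.
Qed.

End TT.


Arguments TT {R} S A.
Arguments lprod {R S A} l l'.
Arguments mulp {R S A} p q.
Arguments smul {R S} x y.
Arguments tmulE {R S A} l l'.
Arguments big_lprod {R S A V} F l l'.
Arguments tmul {R S A} x y.
Arguments tone {R S A}.
HB.instance Definition _ (R : comPzRingType) (S A : CAlg R) :=
  GRing.Zmodule_isComPzRing.Build (TT S A) (@tmulA R S A) (@tmulC R S A)
    (@tmul1 R S A) (@tmulDl R S A).

Section TTmor.
Variables (R : comPzRingType) (S : CAlg R).

Definition jj (A : CAlg R) (a : A) : TT S A := @cl _ (Smod S) A [:: (a, 1)].

Lemma jj_nmod A : nmod_morphism (@jj A).
Proof.
split; first by apply: cl_eq; apply: teq_zero.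
by move=> a b; rewrite /jj -cl_cat; apply: cl_eq; apply: teq_addl.
Qed.

Lemma jj_mon A : monoid_morphism (@jj A).
Proof.
split=> // a b; rewrite /jj /GRing.mul /= tmulE /= /mulp /smul /= mulr1.
by [].
Qed.

End TTmor.

HB.instance Definition _ (R : comPzRingType) (S A : CAlg R) :=
  GRing.isNmodMorphism.Build A (TT S A) (@jj R S A) (@jj_nmod R S A).
HB.instance Definition _ (R : comPzRingType) (S A : CAlg R) :=
  GRing.isMonoidMorphism.Build A (TT S A) (@jj R S A) (@jj_mon R S A).

Definition TTalg (R : comPzRingType) (S A : CAlg R) : CAlg R :=
  {| calg_ring := TT S A; calg_str := (@jj R S A \o calg_str A : {rmorphism _ -> _}) |}.
Arguments TTalg {R} S A.

Definition jA (R : comPzRingType) (S A : CAlg R) : AlgHom A (TTalg S A) :=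
  @Build_AlgHom R A (TTalg S A) (@jj R S A : {rmorphism _ -> _}) (fun r => erefl).

Definition ii (R : comPzRingType) (S A : CAlg R) (s : S) : TT S A :=
  @cl _ (Smod S) A [:: (1, s)].

Lemma ii_nmod (R : comPzRingType) (S A : CAlg R) : nmod_morphism (@ii R S A).
Proof.
split; first by rewrite /ii -[(0 : calg_ring S)](scale0r (1 : Smod S)) ; apply: cl_eq;
  apply: teq_trans (teq_bal _ _ _) _; rewrite rmorph0 mul0r; apply: teq_zero.
by move=> a b; rewrite /ii -cl_cat; apply: cl_eq; apply: teq_addr.
Qed.

Lemma ii_mon (R : comPzRingType) (S A : CAlg R) : monoid_morphism (@ii R S A).
Proof.
split=> // a b; rewrite /ii /GRing.mul /= tmulE /= /mulp /smul /= mulr1.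
by [].
Qed.

HB.instance Definition _ (R : comPzRingType) (S A : CAlg R) :=
  GRing.isNmodMorphism.Build S (TT S A) (@ii R S A) (@ii_nmod R S A).
HB.instance Definition _ (R : comPzRingType) (S A : CAlg R) :=
  GRing.isMonoidMorphism.Build S (TT S A) (@ii R S A) (@ii_mon R S A).

Lemma ii_str (R : comPzRingType) (S A : CAlg R) r :
  @ii R S A (calg_str S r) = calg_str (TTalg S A) r.
Proof.
rewrite /ii /= /jj; apply: cl_eq.
have -> : (calg_str S r : Smod S) = r *: (1 : Smod S) by rewrite SmodZ mulr1.
by rewrite -[calg_str A r]mulr1; apply: teq_bal.
Qed.

Definition iS (R : comPzRingType) (S A : CAlg R) : AlgHom S (TTalg S A) :=
  @Build_AlgHom R S (TTalg S A) (@ii R S A : {rmorphism _ -> _}) (@ii_str R S A).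

Section TMap.
Variables (R : comPzRingType) (S A B : CAlg R) (g : AlgHom A B).

Definition ttmap (x : TT S A) : TT S B := tmap g x.

Lemma gmap_lprod (l l' : seq (A * Smod S)) : gmap g (lprod l l') = lprod (gmap g l) (gmap g l').
Proof.
elim: l => //= p l IH; rewrite /gmap map_cat -IH -!map_comp; congr (_ ++ _).
by apply: eq_map => q /=; rewrite /mulp /= rmorphM.
Qed.

Lemma ttmap_nmod : nmod_morphism ttmap.
Proof. split; [by rewrite /ttmap -[0]/(@cl _ (Smod S) A [::]) tmapE | exact: tmap_add]. Qed.

Lemma ttmap_mon : monoid_morphism ttmap.
Proof.
split; first by rewrite /ttmap /GRing.one /= /tone tmapE /gmap /= rmorph1.
elim/tens_ind=> x; elim/tens_ind=> y.
by rewrite /ttmap /GRing.mul /= (@tmulE R S A x y) !tmapE (@tmulE R S B) gmap_lprod.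
Qed.
End TMap.

HB.instance Definition _ (R : comPzRingType) (S A B : CAlg R) (g : AlgHom A B) :=
  GRing.isNmodMorphism.Build (TT S A) (TT S B) (@ttmap R S A B g) (@ttmap_nmod R S A B g).
HB.instance Definition _ (R : comPzRingType) (S A B : CAlg R) (g : AlgHom A B) :=
  GRing.isMonoidMorphism.Build (TT S A) (TT S B) (@ttmap R S A B g) (@ttmap_mon R S A B g).

Lemma ttmap_str (R : comPzRingType) (S A B : CAlg R) (g : AlgHom A B) r :
  @ttmap R S A B g (calg_str (TTalg S A) r) = calg_str (TTalg S B) r.
Proof. by rewrite /ttmap /= /jj tmapE /gmap /= ahom_str. Qed.

Definition TTmap (R : comPzRingType) (S A B : CAlg R) (g : AlgHom A B) :
  AlgHom (TTalg S A) (TTalg S B) :=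
  @Build_AlgHom R (TTalg S A) (TTalg S B) (@ttmap R S A B g : {rmorphism _ -> _})
    (@ttmap_str R S A B g).

Section Mu.
Variables (R : comPzRingType) (S A T : CAlg R) (al : AlgHom A T) (be : AlgHom S T).

Definition hm (a : A) (s : Smod S) : T := al a * be s.
Lemma hm_Dl a a' s : hm (a + a') s = hm a s + hm a' s.
Proof. by rewrite /hm rmorphD mulrDl. Qed.
Lemma hm_Dr a s s' : hm a (s + s') = hm a s + hm a s'.
Proof. by rewrite /hm (rmorphD be) mulrDr. Qed.
Lemma hm_0 s : hm 0 s = 0.
Proof. by rewrite /hm rmorph0 mul0r. Qed.
Lemma hm_bal r a s : hm a (r *: s) = hm (calg_str A r * a) s.
Proof. by rewrite /hm SmodZ (rmorphM be) (rmorphM al) !ahom_str mulrCA mulrA. Qed.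
Definition hmE := liftE hm_Dl hm_Dr hm_0 hm_bal.

Definition mu (x : TT S A) : T := tlift hm x.

Lemma mu_nmod : nmod_morphism mu.
Proof.
split; first by rewrite /mu -[0]/(@cl _ (Smod S) A [::]) hmE /lsum big_nil.
exact: (lift_add hm_Dl hm_Dr hm_0 hm_bal).
Qed.

Lemma mu_mon : monoid_morphism mu.
Proof.
split.
  by rewrite /mu /GRing.one /= /tone hmE /lsum big_cons big_nil addr0 /hm /= !rmorph1 mulr1.
elim/tens_ind=> x; elim/tens_ind=> y.
rewrite /mu [X in tlift _ X = _](_ : _ = tmul (@cl _ (Smod S) A x) (cl y)) //.
rewrite (@tmulE R S A x y) !hmE /lsum big_lprod mulr_suml.
apply: eq_bigr => p _; rewrite mulr_sumr; apply: eq_bigr => q _.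
by rewrite /hm /mulp /smul /= !rmorphM mulrACA.
Qed.
End Mu.


Arguments mu {R S A T} al be x.
HB.instance Definition _ (R : comPzRingType) (S A T : CAlg R) (al : AlgHom A T) (be : AlgHom S T) :=
  GRing.isNmodMorphism.Build (TT S A) T (mu al be) (@mu_nmod R S A T al be).
HB.instance Definition _ (R : comPzRingType) (S A T : CAlg R) (al : AlgHom A T) (be : AlgHom S T) :=
  GRing.isMonoidMorphism.Build (TT S A) T (mu al be) (@mu_mon R S A T al be).

Lemma mu_cl1 (R : comPzRingType) (S A T : CAlg R) (al : AlgHom A T) (be : AlgHom S T) a s :
  mu al be (@cl _ (Smod S) A [:: (a, s)]) = al a * be s.
Proof. by rewrite /mu hmE /lsum big_cons big_nil addr0. Qed.

Lemma mu_str (R : comPzRingType) (S A T : CAlg R) (al : AlgHom A T) (be : AlgHom S T) r :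
  mu al be (calg_str (TTalg S A) r) = calg_str T r.
Proof. by rewrite /= /jj mu_cl1 rmorph1 mulr1 ahom_str. Qed.

Definition muA (R : comPzRingType) (S A T : CAlg R) (al : AlgHom A T) (be : AlgHom S T) :
  AlgHom (TTalg S A) T :=
  @Build_AlgHom R (TTalg S A) T (mu al be : {rmorphism _ -> _}) (@mu_str R S A T al be).
Arguments muA {R S A T} al be.
Arguments jA {R} S A.
Arguments iS {R} S A.

Lemma muA_j (R : comPzRingType) (S A T : CAlg R) (al : AlgHom A T) (be : AlgHom S T) a :
  muA al be (jA S A a) = al a.
Proof. by rewrite /= /jj mu_cl1 rmorph1 mulr1. Qed.

Lemma muA_i (R : comPzRingType) (S A T : CAlg R) (al : AlgHom A T) (be : AlgHom S T) s :
  muA al be (iS S A s) = be s.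
Proof. by rewrite /= /ii mu_cl1 rmorph1 mul1r. Qed.

Lemma jmulE (R : comPzRingType) (S A : CAlg R) (a : A) (x : TT S A) :
  (jA S A a : TT S A) * x = (a *: (x : tens (Smod S) A) : tens (Smod S) A).
Proof.
elim/tens_ind: x => x.
rewrite [LHS](_ : _ = tmul (@cl _ (Smod S) A [:: (a, 1)]) (cl x)) //.
rewrite tmulE lprod1 [RHS]tscaleE /smap; congr cl; apply: eq_map => -[b s].
by rewrite /mulp /smul /= mul1r.
Qed.

Lemma ahcomp_str (R : comPzRingType) (A B C : CAlg R) (g : AlgHom A B) (h : AlgHom B C) r :
  (h \o g) (calg_str A r) = calg_str C r.
Proof. by rewrite /= !ahom_str. Qed.

Definition ahcomp (R : comPzRingType) (A B C : CAlg R) (g : AlgHom A B) (h : AlgHom B C) :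
  AlgHom A C := @Build_AlgHom R A C (h \o g : {rmorphism _ -> _}) (@ahcomp_str R A B C g h).
Arguments ahcomp {R A B C} g h.

Section Back.
Variables (R : comPzRingType) (M : RMod R) (S : CAlg R) (w : Dual M S).

Definition Fw : RHom M (QC (Smod S)).
Proof.
refine (@Build_RHom R M (QC (Smod S))
  (fun A m => w (TTalg S A) (iS S A) (Mmap M (jA S A) m)) _ _ _).
- by move=> A x y; rewrite Mmap_add dfun_add.
- by move=> A a x; rewrite Mmap_scale dfun_scale; exact: jmulE.
- move=> A B g x /=.
  rewrite -(@Mmap_comp _ M _ _ _ g (jA S B) (ahcomp g (jA S B))) //.
  rewrite (@Mmap_comp _ M _ _ _ (jA S A) (@TTmap R S A B g) (ahcomp g (jA S B))); last first.
    by move=> a; rewrite /= /ttmap /jj tmapE /gmap /=.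
  rewrite (@dfun_nat R M S w _ _ (iS S A) (iS S B) (@TTmap R S A B g)) //.
  by move=> s; rewrite /= /ttmap /ii tmapE /gmap /= rmorph1.
Defined.

End Back.

Lemma pi_inj (R : comPzRingType) (S : CAlg R) (x : TT S (Ralg R)) :
  iS S (Ralg R) (muA (alg_unit S) (alg_id S) x) = x.
Proof.
elim/tens_ind: x => l; rewrite /= /mu hmE /lsum rmorph_sum [RHS]clE.
apply: eq_bigr => -[r s] _; rewrite /hm /= /ii.
apply: cl_eq; rewrite -SmodZ.
have := @teq_bal R (Smod S) (Ralg R) r 1 s.
by rewrite [calg_str _ r * 1]mulr1.
Qed.

Lemma backward (R : comPzRingType) (M : RMod R) :
  (forall N : lmodType R, injective (fun f : RHom M (QC N) => f (Ralg R))) ->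
  dually_separated M.
Proof.
move=> H S w w' Hq.
have Hf : @Fw R M S w = @Fw R M S w'.
  apply: (H (Smod S)); apply: functional_extensionality => m /=.
  rewrite -[LHS]pi_inj -[RHS]pi_inj; congr (iS S (Ralg R) _).
  rewrite -(@dfun_nat R M S w _ _ (iS S (Ralg R)) (alg_id S) (muA (alg_unit S) (alg_id S)));
    last by move=> s; rewrite muA_i.
  rewrite -(@dfun_nat R M S w' _ _ (iS S (Ralg R)) (alg_id S) (muA (alg_unit S) (alg_id S)));
    last by move=> s; rewrite muA_i.
  rewrite -!(@Mmap_comp _ M _ _ _ (jA S (Ralg R)) (muA (alg_unit S) (alg_id S)) (alg_unit S));
    last by move=> a; rewrite muA_j.
  exact: (congr1 (fun F => F m) Hq).
apply: Dual_ext => T phi m.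
have E : Mmap M (muA (alg_id T) phi) (Mmap M (jA S T) m) = m.
  rewrite -(@Mmap_comp _ M _ _ _ (jA S T) (muA (alg_id T) phi) (alg_id T));
    last by move=> a; rewrite muA_j.
  exact: Mmap_id.
rewrite -E (@dfun_nat R M S w _ _ (iS S T) phi (muA (alg_id T) phi));
  last by move=> s; rewrite muA_i.
rewrite (@dfun_nat R M S w' _ _ (iS S T) phi (muA (alg_id T) phi));
  last by move=> s; rewrite muA_i.
exact: (congr1 (fun F : RHom M (QC (Smod S)) => muA (alg_id T) phi (F T m)) Hf).
Qed.

Theorem theorem3p7 (R : comPzRingType) (M : RMod R) :
  dually_separated M <->
  (forall N : lmodType R,
     injective (fun f : RHom M (QC N) => f (Ralg R))).
Proof.
split; [exact: forward | exact: backward].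
Qed.
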